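(* Let $X$ be a real Hilbert space, let $U$ be a closed affine subspace of $X$ and $V$ a nonempty closed convex subset of $X$, let $T:=T_{U,V}$, $v:=P_{\overline{\operatorname{ran}}(\mathrm{Id}-T)}0$, and assume $v\in\operatorname{ran}(\mathrm{Id}-T)$. Then for every $x\in X$, $P_UT^nx-P_UT^{n+1}x\to0$.
   Context: $T_{U,V}:=\mathrm{Id}-P_U+P_V(2P_U-\mathrm{Id})$, the Douglas–Rachford operator for the normal cones of $U$ and $V$; $P_C$ denotes projection onto $C$. *)

(* Defs.v *)
From Stdlib Require Import Reals Lra.
Open Scope R_scope.

Record HilbertSpace := {
  hcarrier :> Type;
  hzero : hcarrier;
  hadd : hcarrier -> hcarrier -> hcarrier;
  hopp : hcarrier -> hcarrier;
  hscal : R -> hcarrier -> hcarrier;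
  hinner : hcarrier -> hcarrier -> R;
  hadd_assoc : forall x y z, hadd x (hadd y z) = hadd (hadd x y) z;
  hadd_comm : forall x y, hadd x y = hadd y x;
  hadd_0 : forall x, hadd x hzero = x;
  hadd_opp : forall x, hadd x (hopp x) = hzero;
  hscal_1 : forall x, hscal 1 x = x;
  hscal_assoc : forall a b x, hscal a (hscal b x) = hscal (a * b) x;
  hscal_distr_l : forall a x y, hscal a (hadd x y) = hadd (hscal a x) (hscal a y);
  hscal_distr_r : forall a b x, hscal (a + b) x = hadd (hscal a x) (hscal b x);
  hinner_sym : forall x y, hinner x y = hinner y x;
  hinner_add_l : forall x y z, hinner (hadd x y) z = hinner x z + hinner y z;
  hinner_scal_l : forall a x y, hinner (hscal a x) y = a * hinner x y;
  hinner_pos : forall x, 0 <= hinner x x;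
  hinner_def : forall x, hinner x x = 0 -> x = hzero;
  hcomplete : forall u : nat -> hcarrier,
    (forall eps, eps > 0 -> exists N, forall m n, (m >= N)%nat -> (n >= N)%nat ->
        sqrt (hinner (hadd (u m) (hopp (u n))) (hadd (u m) (hopp (u n)))) < eps) ->
    exists l, forall eps, eps > 0 -> exists N, forall n, (n >= N)%nat ->
        sqrt (hinner (hadd (u n) (hopp l)) (hadd (u n) (hopp l))) < eps
}.

Arguments hzero {_}.
Arguments hadd {_}.
Arguments hopp {_}.
Arguments hscal {_}.
Arguments hinner {_}.

Definition hsub {X : HilbertSpace} (x y : X) : X := hadd x (hopp y).
Definition hnorm {X : HilbertSpace} (x : X) : R := sqrt (hinner x x).

Definition closure {X : HilbertSpace} (S : X -> Prop) : X -> Prop :=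
  fun x => forall eps, eps > 0 -> exists s, S s /\ hnorm (hsub x s) < eps.
Definition is_closed {X : HilbertSpace} (S : X -> Prop) : Prop :=
  forall x, closure S x -> S x.
Definition nonempty {X : HilbertSpace} (S : X -> Prop) : Prop := exists x, S x.
Definition convex {X : HilbertSpace} (S : X -> Prop) : Prop :=
  forall x y t, S x -> S y -> 0 <= t <= 1 -> S (hadd (hscal t x) (hscal (1 - t) y)).
Definition affine_subspace {X : HilbertSpace} (S : X -> Prop) : Prop :=
  nonempty S /\ forall x y t, S x -> S y -> S (hadd (hscal t x) (hscal (1 - t) y)).

Definition is_proj {X : HilbertSpace} (C : X -> Prop) (x p : X) : Prop :=
  C p /\ forall c, C c -> hnorm (hsub x p) <= hnorm (hsub x c).

Definition DR {X : HilbertSpace} (PU PV : X -> X) (x : X) : X :=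
  hadd (hsub x (PU x)) (PV (hsub (hscal 2 (PU x)) x)).

Definition ran_Id_minus {X : HilbertSpace} (T : X -> X) : X -> Prop :=
  fun y => exists x, y = hsub x (T x).

(* Main.v *)
Require Import Defs.
From Stdlib Require Import Reals Lra Psatz.
Open Scope R_scope.
Lemma ip_addl {X : HilbertSpace} (x y z : X) : hinner (hadd x y) z = hinner x z + hinner y z.
Proof. apply hinner_add_l. Qed.
Lemma ip_addr {X : HilbertSpace} (x y z : X) : hinner z (hadd x y) = hinner z x + hinner z y.
Proof. rewrite !(hinner_sym X z). apply hinner_add_l. Qed.
Lemma ip_scall {X : HilbertSpace} a (x y : X) : hinner (hscal a x) y = a * hinner x y.
Proof. apply hinner_scal_l. Qed.
Lemma ip_scalr {X : HilbertSpace} a (x y : X) : hinner y (hscal a x) = a * hinner y x.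
Proof. rewrite !(hinner_sym X y). apply hinner_scal_l. Qed.
Lemma ip_0l {X : HilbertSpace} (y : X) : hinner hzero y = 0.
Proof. assert (H := hinner_add_l X hzero hzero y). rewrite hadd_0 in H. lra. Qed.
Lemma ip_0r {X : HilbertSpace} (y : X) : hinner y hzero = 0.
Proof. rewrite hinner_sym. apply ip_0l. Qed.
Lemma ip_oppl {X : HilbertSpace} (x y : X) : hinner (hopp x) y = - hinner x y.
Proof. assert (H := hinner_add_l X x (hopp x) y). rewrite hadd_opp, ip_0l in H. lra. Qed.
Lemma ip_oppr {X : HilbertSpace} (x y : X) : hinner y (hopp x) = - hinner y x.
Proof. rewrite !(hinner_sym X y). apply ip_oppl. Qed.

Ltac symnorm := repeat match goal with |- context [@hinner ?X ?a ?b] =>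
   match goal with |- context [@hinner X b a] => progress rewrite (hinner_sym X b a) end end.
Ltac expand := unfold hsub in *;
  repeat rewrite ?ip_addl, ?ip_addr, ?ip_scall, ?ip_scalr, ?ip_0l, ?ip_0r, ?ip_oppl, ?ip_oppr;
  symnorm.

Lemma veq {X : HilbertSpace} (a b : X) : hinner (hsub a b) (hsub a b) = 0 -> a = b.
Proof.
  intro H. apply hinner_def in H. unfold hsub in H.
  rewrite <- (hadd_0 X a). rewrite <- (hadd_opp X b). rewrite (hadd_comm X b).
  rewrite hadd_assoc, H, hadd_comm, hadd_0. reflexivity.
Qed.

Lemma hn_le {X : HilbertSpace} (a b : X) : hnorm a <= hnorm b -> hinner a a <= hinner b b.
Proof. intro H. apply sqrt_le_0; auto using hinner_pos. Qed.
Lemma le_hn {X : HilbertSpace} (a b : X) : hinner a a <= hinner b b -> hnorm a <= hnorm b.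
Proof. intro H. apply sqrt_le_1_alt; auto. Qed.

Lemma lim_lemma a b : (forall t, 0 < t <= 1 -> t*a <= t*t*b) -> a <= 0.
Proof.
  intro H. destruct (Rle_dec a 0) as [|Ha]; auto. exfalso. apply Rnot_le_lt in Ha.
  destruct (Rle_dec b 0) as [Hb|Hb]; [|apply Rnot_le_lt in Hb].
  - specialize (H 1 ltac:(lra)). nra.
  - set (t := a/(a+b)).
    assert (Ht : t*(a+b) = a) by (unfold t; field; lra).
    assert (0 < t) by (unfold t; apply Rdiv_lt_0_compat; lra).
    assert (t <= 1) by nra.
    clearbody t. specialize (H t ltac:(lra)).
    assert (t*t*b = t*a - t*t*a) by nra. assert (0 < t*t*a) by (apply Rmult_lt_0_compat; nra). nra.
Qed.

Lemma proj_vi {X : HilbertSpace} (C : X -> Prop) x p : convex C -> is_proj C x p ->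
  forall c, C c -> hinner (hsub x p) (hsub c p) <= 0.
Proof.
  intros Hcv [Hp Hmin] c Hc.
  cut (2 * hinner (hsub x p) (hsub c p) <= 0). lra.
  apply (lim_lemma _ (hinner (hsub c p) (hsub c p))). intros t Ht.
  assert (Hz := Hcv c p t Hc Hp ltac:(lra)).
  apply Hmin, hn_le in Hz. revert Hz. expand. intro. nra.
Qed.

Lemma vi_proj {X : HilbertSpace} (C : X -> Prop) x p : C p ->
  (forall c, C c -> hinner (hsub x p) (hsub c p) <= 0) -> is_proj C x p.
Proof.
  intros Hp H. split; auto. intros c Hc. apply le_hn.
  specialize (H c Hc). assert (Hq := hinner_pos X (hsub c p)). revert H Hq. expand. intros. lra.
Qed.

Lemma proj_unique {X : HilbertSpace} (C : X -> Prop) x p p' : convex C ->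
  is_proj C x p -> is_proj C x p' -> p = p'.
Proof.
  intros Hc H1 H2. apply veq. apply Rle_antisym; [|apply hinner_pos].
  assert (A := proj_vi C x p Hc H1 p' (proj1 H2)).
  assert (B := proj_vi C x p' Hc H2 p (proj1 H1)). revert A B. expand. intros. lra.
Qed.

Lemma affine_convex {X : HilbertSpace} (U : X -> Prop) : affine_subspace U -> convex U.
Proof. intros [_ H] x y t Hx Hy _. auto. Qed.

Lemma affine_vi {X : HilbertSpace} (U : X -> Prop) x p : affine_subspace U -> is_proj U x p ->
  forall c, U c -> hinner (hsub x p) (hsub c p) = 0.
Proof.
  intros HU Hp c Hc. assert (Hcv := affine_convex U HU).
  assert (A := proj_vi U x p Hcv Hp c Hc).
  assert (B := proj_vi U x p Hcv Hp _ (proj2 HU p c 2 (proj1 Hp) Hc)).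
  revert A B. expand. intros. lra.
Qed.

Lemma proj_self {X : HilbertSpace} (C : X -> Prop) c p : C c -> is_proj C c p -> p = c.
Proof.
  intros Hc [Hp Hm]. specialize (Hm c Hc). apply hn_le in Hm.
  apply veq. apply Rle_antisym; [|apply hinner_pos]. revert Hm. expand. intros. lra.
Qed.

Lemma proj_firm {X : HilbertSpace} (C : X -> Prop) (P : X -> X) x y : convex C ->
  (forall z, is_proj C z (P z)) ->
  hinner (hsub (P x) (P y)) (hsub (P x) (P y)) <= hinner (hsub x y) (hsub (P x) (P y)).
Proof.
  intros Hc HP.
  assert (A := proj_vi C x (P x) Hc (HP x) (P y) (proj1 (HP y))).
  assert (B := proj_vi C y (P y) Hc (HP y) (P x) (proj1 (HP x))).
  revert A B. expand. intros. lra.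
Qed.

Lemma proj_nonexp {X : HilbertSpace} (C : X -> Prop) (P : X -> X) x y : convex C ->
  (forall z, is_proj C z (P z)) ->
  hinner (hsub (P x) (P y)) (hsub (P x) (P y)) <= hinner (hsub x y) (hsub x y).
Proof.
  intros Hc HP. assert (A := proj_firm C P x y Hc HP).
  assert (B := hinner_pos X (hsub (hsub x y) (hsub (P x) (P y)))).
  revert A B. expand. intros. lra.
Qed.

Lemma DR_firm {X : HilbertSpace} (U V : X -> Prop) PU PV x y : convex U -> convex V ->
  (forall z, is_proj U z (PU z)) -> (forall z, is_proj V z (PV z)) ->
  hinner (hsub (DR PU PV x) (DR PU PV y)) (hsub (DR PU PV x) (DR PU PV y))
  + hinner (hsub (hsub x (DR PU PV x)) (hsub y (DR PU PV y)))
           (hsub (hsub x (DR PU PV x)) (hsub y (DR PU PV y)))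
  <= hinner (hsub x y) (hsub x y).
Proof.
  intros HcU HcV HU HV.
  assert (A := proj_firm U PU x y HcU HU).
  assert (B := proj_firm V PV (hsub (hscal 2 (PU x)) x) (hsub (hscal 2 (PU y)) y) HcV HV).
  unfold DR. revert A B.
  set (p := PU x). set (p' := PU y). set (q := PV (hsub (hscal 2 p) x)).
  set (q' := PV (hsub (hscal 2 p') y)). clearbody p p' q q'.
  expand. intros. lra.
Qed.

Lemma closure_incl {X : HilbertSpace} (S : X -> Prop) z : S z -> closure S z.
Proof.
  intros Hz eps He. exists z. split; auto. unfold hnorm, hsub. rewrite hadd_opp, ip_0l, sqrt_0. lra.
Qed.

Theorem proposition4p6 (X : HilbertSpace) (U V : X -> Prop)
  (PU PV : X -> X) (v : X) :
  affine_subspace U -> is_closed U ->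
  nonempty V -> is_closed V -> convex V ->
  (forall x, is_proj U x (PU x)) ->
  (forall x, is_proj V x (PV x)) ->
  is_proj (closure (ran_Id_minus (DR PU PV))) hzero v ->
  ran_Id_minus (DR PU PV) v ->
  forall x : X,
    Un_cv (fun n => hnorm (hsub (PU (Nat.iter n (DR PU PV) x))
                                (PU (Nat.iter (S n) (DR PU PV) x)))) 0.
Proof.
  intros HUa _ _ _ HVc HPU HPV Hv [y0 Hy0] x.
  assert (HcU := affine_convex U HUa).
  assert (Hmin : forall z, ran_Id_minus (DR PU PV) z -> hinner v v <= hinner z z).
  { intros z Hz. assert (H := proj2 Hv z (closure_incl _ z Hz)). apply hn_le in H.
    revert H. expand. intros; lra. }
  unfold DR in Hy0.
  remember (PU y0) as p0 eqn:Ep0.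
  remember (PV (hsub (hscal 2 p0) y0)) as q0 eqn:Eq0.
  assert (Hvpq : v = hsub p0 q0) by (rewrite Hy0; apply veq; expand; ring).
  clear Hy0. subst v.
  assert (Up0 : U p0) by (rewrite Ep0; apply HPU).
  assert (Vq0 : V q0) by (rewrite Eq0; apply HPV).
  assert (M1 : forall q, V q -> hinner (hsub p0 q0) (hsub p0 q0) <= hinner (hsub (PU q) q) (hsub (PU q) q)).
  { intros q Hq. apply Hmin. exists (hsub (hscal 2 (PU q)) q).
    set (x' := hsub (hscal 2 (PU q)) q).
    assert (E1 : PU x' = PU q).
    { symmetry. apply (proj_unique U x'); auto. apply vi_proj. apply HPU.
      intros c Hc. assert (A := affine_vi U q (PU q) HUa (HPU q) c Hc). revert A.
      unfold x'. expand. intros; lra. }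
    assert (E2 : hsub (hscal 2 (PU x')) x' = q) by (rewrite E1; apply veq; unfold x'; expand; ring).
    assert (E3 : PV q = q) by (apply (proj_self V); auto).
    unfold DR. rewrite E2, E3, E1. apply veq. unfold x'. expand. ring. }
  assert (C1 : forall c, U c -> hinner (hsub q0 p0) (hsub c p0) = 0).
  { apply (affine_vi U); auto. split; auto. intros c Hc. apply le_hn.
    assert (A := M1 q0 Vq0). assert (B := hn_le _ _ (proj2 (HPU q0) c Hc)).
    revert A B. expand. intros; lra. }
  assert (C2 : forall c, V c -> hinner (hsub p0 q0) (hsub c q0) <= 0).
  { intros c Hc. cut (2 * hinner (hsub p0 q0) (hsub c q0) <= 0). lra.
    apply (lim_lemma _ (hinner (hsub (hsub (PU c) c) (hsub p0 q0)) (hsub (hsub (PU c) c) (hsub p0 q0)))).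
    intros t Ht.
    assert (Hqt := HVc c q0 t Hc Vq0 ltac:(lra)).
    assert (Hpt := proj2 HUa (PU c) p0 t (proj1 (HPU c)) Up0).
    assert (A := M1 _ Hqt). assert (B := hn_le _ _ (proj2 (HPU (hadd (hscal t c) (hscal (1 - t) q0))) _ Hpt)).
    assert (C := f_equal (Rmult t) (C1 (PU c) (proj1 (HPU c)))). rewrite Rmult_0_r in C.
    revert A B C. expand. intros. nra. }
  assert (C3 : forall z s, PU (hsub z (hscal s (hsub p0 q0))) = PU z).
  { intros z s. symmetry. apply (proj_unique U (hsub z (hscal s (hsub p0 q0)))); auto.
    apply vi_proj. apply HPU. intros c Hc.
    assert (A := affine_vi U z (PU z) HUa (HPU z) c Hc).
    assert (B := f_equal (Rmult s) (C1 c Hc)). assert (B' := f_equal (Rmult s) (C1 _ (proj1 (HPU z)))).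
    rewrite Rmult_0_r in B, B'. revert A B B'. expand. intros. nra. }

  set (y := fun n : nat => hsub y0 (hscal (INR n) (hsub p0 q0))).
  assert (Ey : forall n, PU (y n) = p0) by (intro n; unfold y; rewrite C3; auto).
  assert (Hr0 : is_proj V (hsub (hscal 2 p0) y0) q0) by (rewrite Eq0; apply HPV).
  assert (Eq : forall n, PV (hsub (hscal 2 p0) (y n)) = q0).
  { intro n. symmetry. apply (proj_unique V (hsub (hscal 2 p0) (y n))); auto.
    apply vi_proj; auto. intros c Hc.
    assert (A := proj_vi V _ _ HVc Hr0 c Hc). assert (B := C2 c Hc).
    assert (B' : INR n * hinner (hsub p0 q0) (hsub c q0) <= 0).
    { assert (Hn := pos_INR n). nra. }
    revert A B'. unfold y. expand. intros. nra. }
  assert (ET : forall n, DR PU PV (y n) = y (S n)).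
  { intro n. unfold DR. rewrite Ey, Eq. apply veq. unfold y. rewrite S_INR. expand. ring. }
  assert (EU : forall n, hsub (y n) (DR PU PV (y n)) = hsub p0 q0).
  { intro n. rewrite ET. apply veq. unfold y. rewrite S_INR. expand. ring. }
  set (xn := fun n => Nat.iter n (DR PU PV) x).
  set (d := fun n => hinner (hsub (xn n) (y n)) (hsub (xn n) (y n))).
  set (e := fun n => hinner (hsub (hsub (xn n) (DR PU PV (xn n))) (hsub p0 q0))
                            (hsub (hsub (xn n) (DR PU PV (xn n))) (hsub p0 q0))).
  assert (Hde : forall n, d (S n) + e n <= d n).
  { intro n. assert (H := DR_firm U V PU PV (xn n) (y n) HcU HVc HPU HPV).
    rewrite EU, ET in H. exact H. }
  assert (He0 : forall n, 0 <= e n) by (intro; apply hinner_pos).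
  assert (Hd0 : forall n, 0 <= d n) by (intro; apply hinner_pos).
  destruct (decreasing_cv d) as [l Hl].
  { intro n. specialize (Hde n). specialize (He0 n). lra. }
  { exists 0. intros z [n ->]. unfold opp_seq. specialize (Hd0 n). lra. }
  assert (Hecv : Un_cv e 0).
  { intros eps Heps. destruct (Hl (eps/2) ltac:(lra)) as [N HN]. exists N.
    intros n Hn. assert (A := HN n Hn). assert (B := HN (S n) ltac:(lia)).
    specialize (Hde n). specialize (He0 n). unfold R_dist in *.
    apply Rabs_def2 in A. apply Rabs_def2 in B. apply Rabs_def1; lra. }
  assert (Hb : forall n, hinner (hsub (PU (xn n)) (PU (xn (S n)))) (hsub (PU (xn n)) (PU (xn (S n)))) <= e n).
  { intro n.
    assert (E1 : PU (xn n) = PU (hsub (xn n) (hscal 1 (hsub p0 q0)))) by (symmetry; apply C3).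
    assert (E2 : xn (S n) = hsub (xn n) (hsub (xn n) (DR PU PV (xn n)))).
    { change (xn (S n)) with (DR PU PV (xn n)). apply veq. expand. ring. }
    rewrite E1, E2. eapply Rle_trans. apply (proj_nonexp U PU); auto.
    unfold e. right. expand. ring. }
  intros eps Heps. destruct (Hecv (eps*eps) ltac:(nra)) as [N HN]. exists N.
  intros n Hn. specialize (HN n Hn). specialize (Hb n). unfold R_dist in *.
  rewrite Rminus_0_r in *. rewrite Rabs_right in HN by (apply Rle_ge; apply He0).
  rewrite Rabs_right by (apply Rle_ge; apply sqrt_pos).
  fold (xn n) (xn (S n)). unfold hnorm.
  eapply Rle_lt_trans. apply sqrt_le_1_alt. exact Hb.
  rewrite <- (sqrt_square eps) by lra. apply sqrt_lt_1_alt. split; auto.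
Qed.
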